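(* Let $p$ be a prime, and let $U,V$ be unitary operators on a finite-dimensional complex Hilbert space with $U^p=V^p=I$. Suppose $UV=\zeta VU$ for some $p$th root of unity $\zeta\ne1$. Then $\|P_UP_V\|_{\mathrm{op}}\le p^{-1/2}$, where $P_U=\frac1p\sum_{a=0}^{p-1}U^a$ and $P_V=\frac1p\sum_{a=0}^{p-1}V^a$.
   Context: $P_U$ is the orthogonal projection onto the fixed space of $U$; $\|\cdot\|_{\mathrm{op}}$ is the operator norm. *)

(* Defs.v *)
(* Complex scalars: any numClosedFieldType C (e.g. algC, or
   complex R for R : rcfType, which includes the usual complex numbers). *)
From HB Require Import structures.
From mathcomp Require Import all_boot all_order all_algebra.
Set Implicit Arguments. Unset Strict Implicit. Unset Printing Implicit Defensive.
Import Order.TTheory GRing.Theory Num.Theory.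
Local Open Scope ring_scope.

Section Defs.
Variable C : numClosedFieldType.

Definition adjmx n (A : 'M[C]_n) : 'M[C]_n := (map_mx Num.conj A)^T.

Definition unitary n (A : 'M[C]_n) : Prop := A *m adjmx A = 1%:M.

Definition vnorm n (x : 'cV[C]_n) : C := sqrtC (\sum_i `|x i 0| ^+ 2).

(* "||A||_op <= c": by definition of the operator norm as a supremum,
   ||A||_op <= c iff ||A x|| <= c ||x|| for every vector x. *)
Definition opnorm_le n (A : 'M[C]_n) (c : C) : Prop :=
  forall x : 'cV[C]_n, vnorm (A *m x) <= c * vnorm x.

Definition avgproj n (p : nat) (U : 'M[C]_n) : 'M[C]_n :=
  (p%:R)^-1 *: \sum_(a < p) U ^+ a.
End Defs.

(* Main.v *)
Require Import Defs.
From mathcomp Require Import all_boot all_order all_algebra.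
Import Order.TTheory GRing.Theory Num.Theory.
Local Open Scope ring_scope.

Section Aux.
Variable C : numClosedFieldType.

Definition ad {m k} (A : 'M[C]_(m, k)) : 'M[C]_(k, m) := (map_mx Num.conj A)^T.

Lemma ad_mul m k l (A : 'M[C]_(m, k)) (B : 'M[C]_(k, l)) :
  ad (A *m B) = ad B *m ad A.
Proof. by rewrite /ad map_mxM trmx_mul. Qed.

Lemma ad_ad m k (A : 'M[C]_(m, k)) : ad (ad A) = A.
Proof. by apply/matrixP => i j; rewrite !mxE conjCK. Qed.

Lemma ad_sum m k (I : finType) (F : I -> 'M[C]_(m, k)) :
  ad (\sum_i F i) = \sum_i ad (F i).
Proof.
apply/matrixP => i j; rewrite !mxE !summxE rmorph_sum.
by apply: eq_bigr => a _; rewrite !mxE.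
Qed.

Lemma ad_scale m k (c : C) (A : 'M[C]_(m, k)) : ad (c *: A) = c^* *: ad A.
Proof. by apply/matrixP => i j; rewrite !mxE rmorphM. Qed.

Lemma ad_sub m k (A B : 'M[C]_(m, k)) : ad (A - B) = ad A - ad B.
Proof. by apply/matrixP => i j; rewrite !mxE rmorphB. Qed.

Lemma ad_one n : ad (1 : 'M[C]_n) = 1.
Proof. by apply/matrixP => i j; rewrite !mxE eq_sym; case: (_ == _); rewrite ?conjC_nat. Qed.

Lemma ad_exp n (A : 'M[C]_n) k : ad (A ^+ k) = (ad A) ^+ k.
Proof.
elim: k => [|k IH]; first by rewrite !expr0 ad_one.
by rewrite exprS -mulmxE ad_mul IH mulmxE exprSr.
Qed.

Lemma mulrZ' n (c : C) (A B : 'M[C]_n) : A * (c *: B) = c *: (A * B).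
Proof. by rewrite -!mulmxE scalemxAr. Qed.
Lemma mulZr' n (c : C) (A B : 'M[C]_n) : (c *: A) * B = c *: (A * B).
Proof. by rewrite -!mulmxE scalemxAl. Qed.

Lemma sum_shiftl n (W : 'M[C]_n) p : W ^+ p = 1 ->
  W * \sum_(a < p) W ^+ a = \sum_(a < p) W ^+ a.
Proof.
case: p => [|q] Wp; first by rewrite !big_ord0 mulr0.
rewrite mulr_sumr; under eq_bigr do rewrite -exprS.
rewrite big_ord_recr big_ord_recl /= Wp expr0 addrC.
by congr (_ + _); apply: eq_bigr => i _; rewrite /bump /=.
Qed.
Lemma sum_shiftr n (W : 'M[C]_n) p : W ^+ p = 1 ->
  (\sum_(a < p) W ^+ a) * W = \sum_(a < p) W ^+ a.
Proof.
case: p => [|q] Wp; first by rewrite !big_ord0 mul0r.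
rewrite mulr_suml; under eq_bigr do rewrite -exprSr.
rewrite big_ord_recr big_ord_recl /= Wp expr0 addrC.
by congr (_ + _); apply: eq_bigr => i _; rewrite /bump /=.
Qed.

Lemma nsq_mul n (M : 'M[C]_n) (y : 'cV[C]_n) :
  (ad (M *m y) *m (M *m y)) 0 0 = (ad y *m (ad M *m M) *m y) 0 0.
Proof. by rewrite ad_mul !mulmxA. Qed.

Definition nsq {n} (y : 'cV[C]_n) : C := (ad y *m y) 0 0.

Lemma vnormE n (y : 'cV[C]_n) : vnorm y = sqrtC (nsq y).
Proof.
rewrite /vnorm /nsq !mxE; congr sqrtC; apply: eq_bigr => i _.
by rewrite normCK !mxE mulrC.
Qed.

Lemma nsq_ge0 n (y : 'cV[C]_n) : 0 <= nsq y.
Proof.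
rewrite /nsq mxE; apply: sumr_ge0 => i _; rewrite !mxE mulrC -normCK.
exact: exprn_ge0.
Qed.

End Aux.
Arguments ad {C m k}.
Arguments nsq {C n}.

Theorem lemma4p12 (C : numClosedFieldType) (n p : nat) (U V : 'M[C]_n)
  (zeta : C) :
  prime p ->
  unitary U -> unitary V ->
  U ^+ p = 1%:M -> V ^+ p = 1%:M ->
  zeta ^+ p = 1 -> zeta != 1 ->
  U *m V = zeta *: (V *m U) ->
  opnorm_le (avgproj p U *m avgproj p V) (sqrtC (p%:R)^-1).
Proof.
move=> pr uU uV Up Vp zp z1 comm.
have p0 : (p%:R : C) != 0 by rewrite pnatr_eq0 -lt0n prime_gt0.
have pinvR : (p%:R^-1 : C)^* = p%:R^-1.
  by rewrite fmorphV rmorph_nat.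
have gen : forall W : 'M[C]_n, unitary W -> W ^+ p = 1 ->
   let P := avgproj p W in
   [/\ W * P = P, P * W = P, P * P = P & ad P = P].
  move=> W uW Wp P.
  have WP : W * P = P.
    by rewrite /P /avgproj mulrZ' sum_shiftl.
  have PW : P * W = P.
    by rewrite /P /avgproj mulZr' sum_shiftr.
  have WkP : forall k, W ^+ k * P = P.
    by elim=> [|k IH]; rewrite ?expr0 ?mul1r // exprSr -mulrA WP.
  have PP : P * P = P.
    rewrite {1}/P /avgproj mulZr' mulr_suml.
    under eq_bigr do rewrite WkP.
    by rewrite sumr_const card_ord -scaler_nat scalerA mulVf // scale1r.
  have adWW : ad W * W = 1 by rewrite -mulmxE; apply: mulmx1C; exact: uW.
  have adWP : ad W * P = P by rewrite -{1}WP mulrA adWW mul1r.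
  have adWkP : forall k, ad W ^+ k * P = P.
    by elim=> [|k IH]; rewrite ?expr0 ?mul1r // exprSr -mulrA adWP.
  have adPP : ad P * P = P.
    rewrite {1}/P /avgproj ad_scale ad_sum pinvR mulZr' mulr_suml.
    under eq_bigr do rewrite ad_exp adWkP.
    by rewrite sumr_const card_ord -scaler_nat scalerA mulVf // scale1r.
  split=> //.
  by rewrite -{1}adPP -mulmxE ad_mul ad_ad mulmxE adPP.
have [UP PUU PPU adPU] := gen U uU Up.
have [VP PVV PPV adPV] := gen V uV Vp.
set PU := avgproj p U in UP PUU PPU adPU *.
set PV := avgproj p V in VP PVV PPV adPV *.
have PUE : PU = p%:R^-1 *: \sum_(a < p) U ^+ a by [].
clearbody PU PV.
have commk : forall a, U ^+ a * V = zeta ^+ a *: (V * U ^+ a).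
  elim=> [|a IH]; first by rewrite !expr0 scale1r mulr1 mul1r.
  rewrite exprS -mulrA IH mulrZ' mulrA -mulmxE comm mulmxE mulZr'.
  by rewrite scalerA -mulrA exprS mulrC.
have zne : forall a, (0 < a < p)%N -> zeta ^+ a != 1.
  move=> a /andP[a0 ap].
  have [m pm mp] := prim_order_exists (prime_gt0 pr) zp.
  have : m = p.
    case/primeP: pr => _ /(_ m mp) /orP[/eqP m1|/eqP //].
    by move: pm; rewrite m1 => /prim_expr_order; rewrite expr1 => zz; move: z1; rewrite zz eqxx.
  move=> mpE; rewrite mpE in pm.
  rewrite -(prim_order_dvd pm); apply/negP => /(dvdn_leq a0).
  by rewrite leqNgt ap.
have mid : forall a, (0 < a < p)%N -> PV * U ^+ a * PV = 0.
  move=> a ha.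
  have : PV * U ^+ a * PV = zeta ^+ a *: (PV * U ^+ a * PV).
    have e1 : PV * U ^+ a * PV = PV * (U ^+ a * V) * PV.
      by rewrite mulrA -(mulrA _ V) VP.
    by rewrite {1}e1 commk mulrZ' mulZr' mulrA PVV.
  move/eqP; rewrite -{1}(scale1r (PV * _ * _)) -subr_eq0 -scalerBl.
  rewrite scaler_eq0 subr_eq0 eq_sym (negbTE (zne a ha)) /=.
  by move/eqP.
have key : PV * PU * PV = p%:R^-1 *: PV.
  rewrite PUE mulrZ' mulZr' mulr_sumr mulr_suml; congr (_ *: _).
  rewrite (bigD1 (Ordinal (prime_gt0 pr))) //= expr0 mulr1 PPV big1 ?addr0 //.
  move=> i ne; apply: mid; rewrite ltn_ord andbT lt0n.
  by apply: contra ne => /eqP i0; apply/eqP/val_inj.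
move=> x; rewrite !vnormE.
have adA : ad (PU *m PV) *m (PU *m PV) = p%:R^-1 *: PV.
  by rewrite ad_mul adPU adPV !mulmxE mulrA -(mulrA PV) PPU key.
set Q : 'M[C]_n := 1 - PV.
have adQ : ad Q *m Q = Q.
  rewrite /Q ad_sub ad_one adPV mulmxE mulrBl !mulrBr PPV !mul1r mulr1.
  by rewrite subrr subr0.
have e1 : nsq (PU *m PV *m x) = p%:R^-1 * (nsq x - nsq (Q *m x)).
  rewrite /nsq !nsq_mul adA adQ /Q -!scalemxAr -!scalemxAl mxE; congr (_ * _).
  have h : forall (A B : 'M[C]_1), (A - B) 0 0 = A 0 0 - B 0 0.
    by move=> A B; rewrite !mxE.
  by rewrite mulmxBr mulmxBl mulmx1 h opprB addrC subrK.
have pge : (0 : C) <= p%:R^-1 by rewrite invr_ge0 ler0n.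
have pn : (p%:R^-1 : C) \in Num.nneg by rewrite nnegrE.
have xn : nsq x \in Num.nneg by rewrite nnegrE nsq_ge0.
rewrite -(sqrtCM pn xn).
rewrite ler_sqrtC ?nnegrE ?nsq_ge0 ?mulr_ge0 ?nsq_ge0 //.
rewrite e1 ler_wpM2l // lerBlDr lerDl; exact: nsq_ge0.
Qed.
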